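(* Let $n\ge 1$ and let $X_1,\dots,X_n$ be non-negative random variables defined on a common probability space, where for each $i\in[n]=\{1,\dots,n\}$ the variable $X_i$ has a continuous distribution function $F_i$. No assumption is made about the joint distribution of $(X_1,\dots,X_n)$ (in particular, independence is not assumed). Let $s>0$ and suppose $t(n,s)>0$ satisfies $$ s=\sum_{i=1}^n \int_0^{t(n,s)} x\, dF_i(x). $$ Then $$ \mathbb{E}\Big[\max\Big\{|A| : A\subset[n],\ \sum_{i\in A} X_i\le s\Big\}\Big]\le \sum_{i=1}^n F_i(t(n,s)). $$
   Context: $|A|$ denotes the cardinality of $A$; the empty set is allowed in the maximum, so the maximum is well defined. *)

(* Defs.v *)
From HB Require Import structures.
From mathcomp Require Import all_boot all_order all_algebra.
From mathcomp Require Import all_classical all_reals all_analysis.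
Set Implicit Arguments. Unset Strict Implicit. Unset Printing Implicit Defensive.
Import Order.TTheory GRing.Theory Num.Theory.
Local Open Scope ring_scope.

Definition distr_fun d (T : measurableType d) (R : realType)
  (P : probability T R) (X : {RV P >-> R}) (r : R) : R := fine (cdf X r).

(* max { |A| : A subset of [n], sum_{i in A} x_i <= s } (the empty set is
   always admissible, so the max is well defined; \max over nat with 0). *)
Definition max_subset_card (R : realType) (n : nat) (x : 'I_n -> R) (s : R) : nat :=
  \max_(A : {set 'I_n} | \sum_(i in A) x i <= s) #|A|.

(* Main.v *)
From HB Require Import structures.
From mathcomp Require Import all_boot all_order all_algebra.
From mathcomp Require Import all_classical all_reals all_analysis.
Require Import Defs.
From mathcomp Require Import ring lra.
Import Order.TTheory GRing.Theory Num.Theory.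
Local Open Scope ring_scope.

Lemma comb (R : realType) (n : nat) (x : 'I_n -> R) (s t : R) :
  (forall i, 0 <= x i) -> 0 <= s -> 0 < t ->
  t * (max_subset_card x s)%:R + \sum_(i < n) (if x i <= t then x i else 0)
  <= t * (\sum_(i < n) (if x i <= t then 1 else 0)) + s.
Proof.
move=> x0 s0 t0.
have [A /= HA ->] : {A : {set 'I_n} | A \in [pred A : {set 'I_n} | \sum_(i in A) x i <= s]
   & max_subset_card x s = #|A| }.
  apply: eq_bigmax_cond; apply/card_gt0P; exists (@finset.set0 _); by rewrite inE big_set0.
have -> : t * #|A|%:R = \sum_(i < n) (if i \in A then t else 0).
  by rewrite -big_mkcond /= sumr_const mulr_natr.
rewrite -big_split /= mulr_sumr.
apply: (le_trans (y := \sum_(i < n) ((if x i <= t then t else 0) + (if i \in A then x i else 0)))).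
  apply: ler_sum => i _.
  case: ifP => iA; case: ifP => xt; rewrite ?mulr1 ?mulr0 ?add0r ?addr0 //.
  by apply: ltW; rewrite real_ltNge ?xt // ?num_real.
have -> : \sum_(i < n) t * (if x i <= t then 1 else 0) = \sum_(i < n) (if x i <= t then t else 0).
  by apply: eq_bigr => i _; case: ifP; rewrite ?mulr1 ?mulr0.
rewrite big_split /= lerD2l -big_mkcond /=.
apply: le_trans HA _; apply: lexx.
Qed.
Section mono.
Local Open Scope ereal_scope.
Lemma nn_le_integral d (T : measurableType d) (R : realType)
  (mu : {measure set T -> \bar R}) (f g : T -> \bar R) :
  (forall x, 0 <= f x) -> (forall x, f x <= g x) ->
  \int[mu]_x f x <= \int[mu]_x g x.
Proof.
move=> f0 fg.
have g0 : forall x, 0 <= g x by move=> x; apply: le_trans (f0 x) (fg x).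
rewrite !ge0_integralTE //.
apply: le_ereal_sup => _ [h hf <-]; exists h => //= x.
exact: le_trans (hf x) (fg x).
Qed.
End mono.
Import numFieldTopology.Exports.
Local Open Scope classical_set_scope.
Local Open Scope ring_scope.

Theorem theorem1 (d : measure_display) (T : measurableType d) (R : realType)
  (P : probability T R) (n : nat) (X : 'I_n -> {RV P >-> R}) (s t : R) :
  (1 <= n)%N ->
  (forall i w, 0 <= X i w) ->
  (forall i, continuous (distr_fun (X i))) ->
  0 < s -> 0 < t ->
  s%:E = (\sum_(i < n) \int[distribution P (X i)]_(x in `[0%R, t%R]) x%:E)%E ->
  (expectation P (fun w => ((max_subset_card (fun i => X i w) s)%:R)%R)
     <= (\sum_(i < n) distr_fun (X i) t)%:E)%E.
Proof.
move=> _ X0 _ s0 t0 hs.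
pose E i := X i @^-1` `]-oo, t].
have mE i : measurable (E i) by apply: measurable_funPTI.
have indE i w : \1_(E i) w = if X i w <= t then 1 else 0 :> R.
  rewrite indicE; case: ifP => h.
    by rewrite mem_set //= /E /= in_itv /= h.
  rewrite memNset //= /E /= in_itv /= h //.
pose N w : R := \sum_(i < n) \1_(E i) w.
pose S w := \sum_(i < n) X i w * \1_(E i) w.
pose h w := N w + s / t - t^-1 * S w.
have mN : measurable_fun setT N.
  by apply: measurable_sum => k; exact: measurable_realfun.measurable_indic (mE k).
have mS : measurable_fun setT S.
  apply: measurable_sum => k; apply: measurable_realfun.measurable_funM => //.
have mh : measurable_fun setT h.
  apply: measurable_realfun.measurable_funB; last first.
    by apply: measurable_realfun.measurable_funM => //; exact: measurable_cst.
  by apply: measurable_realfun.measurable_funD => //; exact: measurable_cst.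
have Mh w : (max_subset_card (fun i => X i w) s)%:R <= h w.
  have := @comb R n (fun i => X i w) s t (fun i => X0 i w) (ltW s0) t0.
  have -> : \sum_(i < n) (if X i w <= t then X i w else 0) = S w.
    by apply: eq_bigr => i _; rewrite indE; case: ifP; rewrite ?mulr1 ?mulr0.
  have -> : \sum_(i < n) (if X i w <= t then 1 else 0) = N w.
    by apply: eq_bigr => i _; rewrite indE.
  move=> H; rewrite -(ler_pM2l t0).
  have -> : t * h w = t * N w + s - S w.
    rewrite /h; field; exact: lt0r_neq0.
  lra.
have hge0 w : 0 <= h w := le_trans (ler0n _ _) (Mh w).
have Sge0 w : 0 <= S w.
  by apply: sumr_ge0 => i _; apply: mulr_ge0 => //; rewrite indE; case: ifP.
have tS0 w : 0 <= t^-1 * S w by apply: mulr_ge0 => //; rewrite invr_ge0 ltW.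
have mtS : measurable_fun setT (fun w => t^-1 * S w).
  by apply: measurable_realfun.measurable_funM => //; exact: measurable_cst.
have eq1 : (\int[P]_w ((h w)%:E + (t^-1 * S w)%:E) =
    \int[P]_w (h w)%:E + \int[P]_w (t^-1 * S w)%:E)%E.
  by apply: ge0_integralD => //; [move=> w _; rewrite lee_fin|exact/measurable_realfun.measurable_EFinP|
     move=> w _; rewrite lee_fin|exact/measurable_realfun.measurable_EFinP].
have eq2 : (\int[P]_w ((h w)%:E + (t^-1 * S w)%:E) =
    \int[P]_w ((N w)%:E + (s / t)%:E))%E.
  apply: eq_integral => w _; rewrite -EFinD; congr (_%:E); rewrite /h; ring.
have eq3 : (\int[P]_w ((N w)%:E + (s / t)%:E) =
    \sum_(i < n) P (E i) + (s / t)%:E)%E.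
  have N0 w : 0 <= N w by apply: sumr_ge0 => i _; rewrite indE; case: ifP.
  rewrite ge0_integralD //; try (by move=> w _; rewrite lee_fin ?divr_ge0 // ltW);
    try exact/measurable_realfun.measurable_EFinP.
  congr (_ + _)%E.
    rewrite (eq_integral (fun w => \sum_(i < n) (\1_(E i) w)%:E)%E); last first.
      by move=> w _; rewrite /N sumEFin.
    rewrite ge0_integral_sum //; try (by move=> i w _; rewrite lee_fin indE; case: ifP);
      try (by move=> i; apply/measurable_realfun.measurable_EFinP;
               exact: measurable_realfun.measurable_indic (mE i)).
    apply: eq_bigr => i _; rewrite integral_indic // setIT //.
  rewrite (_ : (fun _ => _) = cst (s / t)%:E) //.
  rewrite integral_cst //.
  transitivity ((s / t)%:E * 1)%E; last exact: mule1.
  congr (_ * _)%E; exact: probability_setT.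
have eq4 : (\int[P]_w (t^-1 * S w)%:E = (s / t)%:E)%E.
  have XE0 i w : 0 <= X i w * \1_(E i) w.
    by apply: mulr_ge0 => //; rewrite indE; case: ifP.
  have mXE i : measurable_fun setT (fun w => X i w * \1_(E i) w).
    apply: measurable_realfun.measurable_funM => //.
  have intS : (\int[P]_w (S w)%:E = s%:E)%E.
    rewrite (eq_integral (fun w => \sum_(i < n) (X i w * \1_(E i) w)%:E)%E); last first.
      by move=> w _; rewrite /S sumEFin.
    rewrite ge0_integral_sum //; try (by move=> i w _; rewrite lee_fin);
      try (by move=> i; apply/measurable_realfun.measurable_EFinP).
    rewrite hs; apply: eq_bigr => i _.
    rewrite /distribution ge0_integral_pushforward //.
    - rewrite [RHS]integral_mkcond; apply: eq_integral => w _; rewrite patchE indE.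
      case: ifP => xt.
        by rewrite mem_set ?mulr1 //= in_itv /= X0 xt.
      by rewrite memNset ?mulr0 //= in_itv /= xt andbF.
    - by move=> y; rewrite inE /= in_itv /= => /andP[y0 _]; rewrite lee_fin.
  rewrite (eq_integral (fun w => (t^-1)%:E * (S w)%:E)%E); last first.
    by move=> w _; rewrite EFinM.
  rewrite ge0_integralZl_EFin //; try (by move=> w _; rewrite lee_fin);
    try (by apply/measurable_realfun.measurable_EFinP);
    try (by rewrite invr_ge0 ltW).
  by rewrite intS -EFinM mulrC.
have fin_s : ((s / t)%:E \is a fin_num)%E by [].
have -> : ('E_P[(fun w : T => (max_subset_card (fun i : 'I_n => X i w) s)%:R)] <=
   (\sum_(i < n) distr_fun (X i) t)%:E)%E =
   ('E_P[(fun w : T => (max_subset_card (fun i : 'I_n => X i w) s)%:R)] <=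
   \int[P]_w (h w)%:E)%E.
  congr (_ <= _)%E.
  have eqh : (\int[P]_w (h w)%:E = \sum_(i < n) P (E i))%E.
    by rewrite -(addeK (\int[P]_w (h w)%:E) fin_s) -eq4 -eq1 eq2 eq3 eq4 addeK.
  rewrite eqh.
  rewrite /distr_fun EFin_sum_fine; last first.
    move=> i _.
  rewrite ge0_fin_numE ?measure_ge0 //.
  exact: le_lt_trans (probability_le1 _ _) (ltey _).
by apply: eq_bigr.
rewrite unlock.
apply: nn_le_integral => w; first by rewrite lee_fin.
by rewrite lee_fin.
Qed.
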